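(* Let $L=(\phi,f,\eta):\mathbb{TD}_n\to\mathbb{TB}^{F_2}_{\mathbb{R},n}$ be the crossed intertwiner with $\phi(a\oplus\hat a)=a$, $f(m\oplus\hat m,s)=(\tau_{s,\hat m},m)$ where $\tau_{s,\hat m}(c)=s+\hat mc$, and $\eta(a\oplus\hat a,a'\oplus\hat a')=\hat aa'$ (a constant function). For every $B\in\mathfrak{so}(n,\mathbb{Z})$ let $F_B=(\mathrm{id}_{\mathbb{R}^n},f_B,\eta_B)$ act on $\mathbb{TB}^{F_2}_{\mathbb{R},n}$ with $f_B(\tau,m)=(\tau-\langle m|B|,m)$ and $\eta_B(a,a')=\langle a'|B|a\rangle_{low}$ (constant function), and let $F_{e^B}=(\phi_{e^B},f_{e^B},\eta_{e^B})$ act on $\mathbb{TD}_n$ with $\phi_{e^B}(a\oplus\hat a)=a\oplus(Ba+\hat a)$, $f_{e^B}(m\oplus\hat m,s)=(m\oplus(Bm+\hat m),s)$ and $\eta_{e^B}(a\oplus\hat a,b\oplus\hat b)=\langle a|B|b\rangle_{low}$. Then $L$ is strictly $\mathfrak{so}(n,\mathbb{Z})$-equivariant: $F_B\circ L=L\circ F_{e^B}$ for all $B\in\mathfrak{so}(n,\mathbb{Z})$, with composition of crossed intertwiners as defined below.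
   Context: $U(1)=\mathbb{R}/\mathbb{Z}$, $\mathbb{T}^n=\mathbb{R}^n/\mathbb{Z}^n$ additively; $vw=\sum v_iw_i$. For $B\in\mathfrak{so}(n,\mathbb{Z})$ (skew-symmetric integer matrices), $\langle v|B|w\rangle=\sum B_{ij}v_iw_j$, $B_{low}$ the strictly lower triangular matrix with $B=B_{low}-B_{low}^T$, $\langle v|B|w\rangle_{low}=\langle v|B_{low}|w\rangle$, and $\langle m|B|$ for $m\in\mathbb{Z}^n$ is the function $c\mapsto\langle m|B|c\rangle$ on $\mathbb{T}^n$. For $\tau\in C^\infty(\mathbb{T}^n,U(1))$, $a.\tau(c)=\tau(c-a)$. A crossed module $(G,H,t,\alpha)$: Lie groups $G,H$, homomorphism $t:H\to G$, smooth action $\alpha$ of $G$ on $H$ by automorphisms with $\alpha(t(h),h')=hh'h^{-1}$, $t(\alpha(g,h))=gt(h)g^{-1}$; $U:=\ker t$. A crossed intertwiner $(\phi,f,\eta):(G,H,t,\alpha)\to(G',H',t',\alpha')$ consists of homomorphisms $\phi:G\to G'$, $f:H\to H'$ and a smooth map $\eta:G\times G\to U'$ with (CI1) $\phi(t(h))=t'(f(h))$; (CI2) $\eta(t(h),t(h'))=1$; (CI3) $\eta(g,t(h)g^{-1})f(\alpha(g,h))=\alpha'(\phi(g),\eta(t(h)g^{-1},g))\,\alpha'(\phi(g),f(h))$; (CI4) $\eta(g,g')\eta(gg',g'')=\alpha'(\phi(g),\eta(g',g''))\eta(g,g'g'')$. Composition: $(\phi_2,f_2,\eta_2)\circ(\phi_1,f_1,\eta_1)=(\phi_2\circ\phi_1,f_2\circ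 f_1,(\eta_2\circ(\phi_1\times\phi_1))\cdot(f_2\circ\eta_1))$. $\mathbb{TD}_n$: $G=\mathbb{R}^{2n}=\mathbb{R}^n\oplus\mathbb{R}^n$ (elements $a\oplus\hat a$), $H=(\mathbb{Z}^n\oplus\mathbb{Z}^n)\times U(1)$ (elements $(m\oplus\hat m,s)$), $t(m\oplus\hat m,s)=m\oplus\hat m$, $\alpha(a\oplus\hat a,(m\oplus\hat m,s))=(m\oplus\hat m,s-\hat am)$. $\mathbb{TB}^{F_2}_{\mathbb{R},n}$: $G=\mathbb{R}^n$, $H=C^\infty(\mathbb{T}^n,U(1))\times\mathbb{Z}^n$ (pointwise group structure on the first factor), $t(\tau,m)=m$, $\alpha(a,(\tau,m))=(a.\tau,m)$. *)

(* Defs.v *)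
From mathcomp Require Import all_boot.
From Stdlib Require Import Reals ZArith.

Set Implicit Arguments.
Unset Strict Implicit.

(* ---------- U(1) = R/Z, represented by canonical representatives in [0,1) *)
Definition U1 : Type := {x : R | (0 <= x < 1)%R}.

Lemma frac_part_bounds (x : R) : (0 <= frac_part x < 1)%R.
Proof. destruct (base_fp x) as [H1 H2]. split; [apply Rge_le; exact H1 | exact H2]. Qed.

Definition u1 (x : R) : U1 := exist _ (frac_part x) (frac_part_bounds x).
Definition u1val (s : U1) : R := proj1_sig s.
Definition u1add (s t : U1) : U1 := u1 (u1val s + u1val t)%R.
Definition u1opp (s : U1) : U1 := u1 (- u1val s)%R.

Definition Vn (n : nat) : Type := 'I_n -> R.
Definition Zn (n : nat) : Type := 'I_n -> Z.
Definition Tn (n : nat) : Type := 'I_n -> U1.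

Definition rsum (n : nat) (F : 'I_n -> R) : R := \big[Rplus/0%R]_(i < n) F i.
Definition zsum (n : nat) (F : 'I_n -> Z) : Z := \big[Z.add/0%Z]_(i < n) F i.

Definition zvec (n : nat) (m : Zn n) : Vn n := fun i => IZR (m i).
Definition zn_add (n : nat) (m m' : Zn n) : Zn n := fun i => (m i + m' i)%Z.
Definition zn_zero (n : nat) : Zn n := fun _ => 0%Z.

Definition dot (n : nat) (v w : Vn n) : R := rsum (fun i => v i * w i)%R.

Definition ZMat (n : nat) : Type := 'I_n -> 'I_n -> Z.
Definition skew (n : nat) (B : ZMat n) : Prop := forall i j, B i j = (- B j i)%Z.

Definition braket (n : nat) (B : ZMat n) (v w : Vn n) : R :=
  rsum (fun i => rsum (fun j => IZR (B i j) * v i * w j))%R.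
(* strictly lower triangular part: B = B_low - B_low^T for skew B *)
Definition Blow (n : nat) (B : ZMat n) : ZMat n :=
  fun i j => if ltn j i then B i j else 0%Z.
Definition braket_low (n : nat) (B : ZMat n) (v w : Vn n) : R := braket (Blow B) v w.

Definition matvecR (n : nat) (B : ZMat n) (a : Vn n) : Vn n :=
  fun i => rsum (fun j => IZR (B i j) * a j)%R.
Definition matvecZ (n : nat) (B : ZMat n) (m : Zn n) : Zn n :=
  fun i => zsum (fun j => (B i j * m j)%Z).

(* functions T^n -> U(1) built from integer data (well defined mod Z) *)
Definition pairT (n : nat) (m : Zn n) (c : Tn n) : U1 :=
  u1 (dot (zvec m) (fun i => u1val (c i))).
Definition braT (n : nat) (B : ZMat n) (m : Zn n) (c : Tn n) : U1 :=
  u1 (braket B (zvec m) (fun i => u1val (c i))).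
Definition tau (n : nat) (s : U1) (mh : Zn n) : Tn n -> U1 :=
  fun c => u1add s (pairT mh c).

Definition TD_G (n : nat) : Type := (Vn n * Vn n)%type.
Definition TD_H (n : nat) : Type := ((Zn n * Zn n) * U1)%type.
Definition TB_G (n : nat) : Type := Vn n.
Definition TB_H (n : nat) : Type := ((Tn n -> U1) * Zn n)%type.
Definition TB_mul (n : nat) (h h' : TB_H n) : TB_H n :=
  (fun c => u1add (h.1 c) (h'.1 c), zn_add h.2 h'.2).

(* eta takes values in U' = ker t', viewed inside H' *)
Record CI (G H G' H' : Type) := MkCI {
  ci_phi : G -> G';
  ci_f : H -> H';
  ci_eta : G -> G -> H' }.

Definition ci_comp (G H G' H' G'' H'' : Type) (mul'' : H'' -> H'' -> H'')
  (c2 : CI G' H' G'' H'') (c1 : CI G H G' H') : CI G H G'' H'' :=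
  MkCI (fun g => ci_phi c2 (ci_phi c1 g))
       (fun h => ci_f c2 (ci_f c1 h))
       (fun g g' => mul'' (ci_eta c2 (ci_phi c1 g) (ci_phi c1 g'))
                          (ci_f c2 (ci_eta c1 g g'))).

Definition L_CI (n : nat) : CI (TD_G n) (TD_H n) (TB_G n) (TB_H n) :=
  MkCI (fun g : TD_G n => g.1)
       (fun h : TD_H n => (tau h.2 h.1.2, h.1.1))
       (fun g g' : TD_G n => ((fun _ => u1 (dot g.2 g'.1)), @zn_zero n)).

Definition FB_CI (n : nat) (B : ZMat n) : CI (TB_G n) (TB_H n) (TB_G n) (TB_H n) :=
  MkCI (fun a : TB_G n => a)
       (fun h : TB_H n => ((fun c => u1add (h.1 c) (u1opp (braT B h.2 c))), h.2))
       (fun a a' : TB_G n => ((fun _ => u1 (braket_low B a' a)), @zn_zero n)).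

Definition FeB_CI (n : nat) (B : ZMat n) : CI (TD_G n) (TD_H n) (TD_G n) (TD_H n) :=
  MkCI (fun g : TD_G n => (g.1, fun i => (matvecR B g.1 i + g.2 i)%R))
       (fun h : TD_H n => ((h.1.1, zn_add (matvecZ B h.1.1) h.1.2), h.2))
       (fun g g' : TD_G n => ((@zn_zero n, @zn_zero n), u1 (braket_low B g.1 g'.1))).

(* Main.v *)
From HB Require Import structures.
Require Import Defs.
From mathcomp Require Import all_boot.
From Stdlib Require Import Reals ZArith Lra Lia ProofIrrelevance FunctionalExtensionality.

Lemma RplusA : associative Rplus. Proof. intros a b c; symmetry; apply Rplus_assoc. Qed.
Lemma RplusC : commutative Rplus. Proof. intros a b; apply Rplus_comm. Qed.
Lemma Rplus0 : left_id 0%R Rplus. Proof. intros a; apply Rplus_0_l. Qed.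
HB.instance Definition _ := Monoid.isComLaw.Build R 0%R Rplus RplusA RplusC Rplus0.

Local Open Scope R_scope.

Lemma u1_eq x y k : x - y = IZR k -> u1 x = u1 y.
Proof.
  intro H. unfold u1.
  assert (Hf : frac_part x = frac_part y).
  { destruct (frac_part_bounds x) as [a b]; destruct (frac_part_bounds y) as [c d].
    assert (E : frac_part x - frac_part y = IZR (k - Int_part x + Int_part y)).
    { unfold frac_part. rewrite plus_IZR minus_IZR. lra. }
    assert (H1 : (-1 < k - Int_part x + Int_part y)%Z) by (apply lt_IZR; rewrite <- E; lra).
    assert (H2 : (k - Int_part x + Int_part y < 1)%Z) by (apply lt_IZR; rewrite <- E; lra).
    assert (k - Int_part x + Int_part y = 0)%Z by lia.
    rewrite H0 in E. simpl in E. lra. }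
  generalize (frac_part_bounds x) (frac_part_bounds y). rewrite Hf. intros.
  f_equal. apply proof_irrelevance.
Qed.

Lemma L4 x y : u1 (u1val (u1 x) + y) = u1 (x + y).
Proof. apply (u1_eq _ _ (- Int_part x)%Z). unfold u1val, u1, frac_part; simpl. rewrite opp_IZR. lra. Qed.
Lemma L5 x y : u1 (y + u1val (u1 x)) = u1 (y + x).
Proof. apply (u1_eq _ _ (- Int_part x)%Z). unfold u1val, u1, frac_part; simpl. rewrite opp_IZR. lra. Qed.
Lemma L6 x : u1 (- u1val (u1 x)) = u1 (- x).
Proof. apply (u1_eq _ _ (Int_part x)). unfold u1val, u1, frac_part; simpl. lra. Qed.

Lemma rsum_add n (F G : 'I_n -> R) : rsum (fun i => F i + G i) = rsum F + rsum G.
Proof.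
  unfold rsum. apply (big_rec3 (fun a b c => a = b + c)); [lra|].
  intros i y1 y2 y3 _ ->. lra.
Qed.
Lemma rsum_opp n (F : 'I_n -> R) : rsum (fun i => - F i) = - rsum F.
Proof.
  unfold rsum. apply (big_rec2 (fun a b => a = - b)); [lra|].
  intros i y1 y2 _ ->. lra.
Qed.
Lemma rsum_mulr n (F : 'I_n -> R) c : rsum (fun i => F i * c) = rsum F * c.
Proof.
  unfold rsum. apply (big_rec2 (fun a b => a = b * c)); [lra|].
  intros i y1 y2 _ ->. lra.
Qed.
Lemma rsum_ext n (F G : 'I_n -> R) : (forall i, F i = G i) -> rsum F = rsum G.
Proof. intro H. unfold rsum. apply eq_bigr. intros; apply H. Qed.
Lemma rsum_zero n : rsum (fun _ : 'I_n => 0) = 0.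
Proof.
  unfold rsum. apply (big_rec (fun a => a = 0)); [lra|]. intros i y _ ->. lra.
Qed.
Lemma rsum_swap n (F : 'I_n -> 'I_n -> R) :
  rsum (fun i => rsum (fun j => F i j)) = rsum (fun j => rsum (fun i => F i j)).
Proof. unfold rsum. exact: exchange_big. Qed.
Lemma zsum_IZR n (F : 'I_n -> Z) : IZR (zsum F) = rsum (fun i => IZR (F i)).
Proof.
  unfold zsum, rsum. apply (big_rec2 (fun a b => IZR a = b)); [reflexivity|].
  intros i y1 y2 _ <-. apply plus_IZR.
Qed.

Lemma I1 n (B : ZMat n) (hB : skew B) (m mh : Zn n) (cv : Vn n) :
  dot (zvec (zn_add (matvecZ B m) mh)) cv = dot (zvec mh) cv - braket B (zvec m) cv.
Proof.
  transitivity (dot (zvec mh) cv + rsum (fun i => rsum (fun j => IZR (B i j) * IZR (m j) * cv i))).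
  - unfold dot, zvec, zn_add, matvecZ. rewrite <- rsum_add. apply rsum_ext; intro i.
    rewrite plus_IZR zsum_IZR.
    assert (E : rsum (fun j => IZR (B i j * m j)) * cv i = rsum (fun j => IZR (B i j) * IZR (m j) * cv i)).
    { rewrite <- rsum_mulr. apply rsum_ext; intro j. rewrite mult_IZR. ring. }
    rewrite <- E. ring.
  - unfold Rminus. f_equal. unfold braket, zvec. rewrite rsum_swap. rewrite <- rsum_opp.
    apply rsum_ext; intro i. rewrite <- rsum_opp. apply rsum_ext; intro j.
    rewrite (hB i j) opp_IZR. ring.
Qed.

Lemma braket_zero n (B : ZMat n) v : braket B (zvec (@zn_zero n)) v = 0.
Proof.
  unfold braket. rewrite <- (rsum_zero n). apply rsum_ext; intro i.
  rewrite <- (rsum_zero n). apply rsum_ext; intro j. unfold zvec, zn_zero. ring.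
Qed.
Lemma dot_zero n v : dot (zvec (@zn_zero n)) v = 0.
Proof.
  unfold dot. rewrite <- (rsum_zero n). apply rsum_ext; intro i. unfold zvec, zn_zero. ring.
Qed.

Lemma I2 n (B : ZMat n) (a ah a' : Vn n) :
  dot (fun i => matvecR B a i + ah i) a' = dot ah a' + braket B a' a.
Proof.
  unfold dot, braket. rewrite <- rsum_add. apply rsum_ext; intro i.
  unfold matvecR. rewrite Rmult_plus_distr_r. rewrite Rplus_comm. f_equal.
  rewrite <- rsum_mulr. apply rsum_ext; intro j. ring.
Qed.
Lemma I3 n (B : ZMat n) (hB : skew B) (a a' : Vn n) :
  braket_low B a' a = braket_low B a a' + braket B a' a.
Proof.
  unfold braket_low, braket. rewrite (@rsum_swap n (fun i j => IZR (Blow B i j) * a i * a' j)).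
  rewrite <- rsum_add. apply rsum_ext; intro i. rewrite <- rsum_add. apply rsum_ext; intro j.
  unfold Blow.
  destruct (ltn j i) eqn:E1; destruct (ltn i j) eqn:E2.
  - exfalso. have := ltn_trans E1 E2. by rewrite ltnn.
  - ring.
  - rewrite (hB i j) opp_IZR. ring.
  - have Hij : i = j.
    { apply: val_inj. apply/eqP; rewrite eqn_leq; apply/andP; split; rewrite leqNgt; [exact: negbT E1 | exact: negbT E2]. }
    subst j. have H0 : B i i = 0%Z by (have := hB i i; lia).
    rewrite H0. ring.
Qed.

Lemma val_u1 x : u1val (u1 x) = x - IZR (Int_part x).
Proof. reflexivity. Qed.

Theorem mainTheorem8 (n : nat) (B : ZMat n) (hB : skew B) :
  ci_comp (@TB_mul n) (FB_CI B) (L_CI n) = ci_comp (@TB_mul n) (L_CI n) (FeB_CI B).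
Proof.
  unfold ci_comp, FB_CI, L_CI, FeB_CI, TB_mul; simpl.
  f_equal.
  - apply functional_extensionality; intros [[m mh] s]; simpl.
    f_equal. apply functional_extensionality; intro c.
    unfold u1add, u1opp, tau, pairT, braT, u1add.
    rewrite !val_u1.
    set cv := (fun i : 'I_n => u1val (c i)).
    rewrite (@I1 n B hB m mh cv).
    set P := dot (zvec mh) cv. set Q := braket B (zvec m) cv.
    set z1 := Int_part P. set z3 := Int_part Q.
    set z2 := Int_part (u1val s + _). set z4 := Int_part (- _). set z5 := Int_part _.
    clearbody z1 z2 z3 z4 z5.
    apply (u1_eq _ _ (- z1 - z2 + z3 - z4 + z5)%Z).
    rewrite ?plus_IZR ?minus_IZR ?opp_IZR. lra.
  - apply functional_extensionality; intros [a ah].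
    apply functional_extensionality; intros [a' ah']. simpl.
    f_equal. apply functional_extensionality; intro c.
    unfold u1add, u1opp, tau, pairT, braT, u1add.
    rewrite braket_zero dot_zero.
    rewrite (@I2 n B a ah a').
    have HX := @I3 n B hB a a'.
    rewrite !val_u1.
    set D := dot ah a' in HX *. set W := braket B a' a in HX *. set Y := braket_low B a a' in HX *. set X := braket_low B a' a in HX *.

    set z0 := Int_part 0. set zX := Int_part X. set zD := Int_part D. set zY := Int_part Y.
    set zR1 := Int_part (D + W). set zw := Int_part (- _). set zL := Int_part (D - _ + _).
    set zR2 := Int_part (Y - _ + _).
    clearbody z0 zX zD zY zR1 zw zL zR2.
    apply (u1_eq _ _ (-zX - zD + z0 - zw - zL + zR1 + zY + z0 + zR2)%Z).
    rewrite ?plus_IZR ?minus_IZR ?opp_IZR. lra.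
Qed.
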